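(* Let $X$ be a random variable in $[0,1]$ with mean $\mu\in(0,1)$ and variance $\sigma^2$, and let $g(\mu)=\max\{\mu,1-\mu\}$. Then \[ \mathbb{E}[\psi_E(|X-\mu|)]\le\sigma^2\,\frac{\psi_E(g(\mu))}{g(\mu)^2}. \] Moreover, this constant is sharp: for each $\mu\in(0,1)$, \[ \sup\left\{\frac{\mathbb{E}[\psi_E(|X-\mu|)]}{\operatorname{Var}(X)}\right\}=\frac{\psi_E(g(\mu))}{g(\mu)^2}, \] where the supremum is over all non-degenerate random variables $X\in[0,1]$ with $\mathbb{E}X=\mu$.
   Context: $\psi_E(x)=-\log(1-x)-x$ for $x\in[0,1)$. *)

(* Defs.v *)
From HB Require Import structures.
From mathcomp Require Import all_boot all_order all_algebra.
From mathcomp Require Import all_classical all_reals all_analysis.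
Set Implicit Arguments. Unset Strict Implicit. Unset Printing Implicit Defensive.
Import Order.TTheory GRing.Theory Num.Theory.
Local Open Scope ring_scope.

(* psi_E(x) = -log(1-x) - x, meant for x in [0,1). *)
Definition psiE {R : realType} (x : R) : R := - ln (1 - x) - x.

Definition gmu {R : realType} (mu : R) : R := Num.max mu (1 - mu).

(* Main.v *)
Require Import Defs.
From HB Require Import structures.
From mathcomp Require Import all_boot all_order all_algebra.
From mathcomp Require Import all_classical all_reals all_analysis.
From mathcomp Require Import ring lra measurable_realfun.
Import Order.TTheory GRing.Theory Num.Theory.
Import numFieldNormedType.Exports numFieldTopology.Exports.
Local Open Scope classical_set_scope.
Local Open Scope ring_scope.
Section S.
Variable R : realType.
Implicit Types x s t : R.

Lemma mono_helper (f df : R -> R) a b : a <= b ->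
  (forall x, a <= x <= b -> is_derive x 1 f (df x)) ->
  (forall x, a < x < b -> 0 <= df x) -> f a <= f b.
Proof.
move=> ab fd dfp.
case: (ltgtP a b) ab => // [altb|->] _; last by [].
have fc : {within `[a, b]%classic, continuous f}.
  apply: (@derivable_within_continuous _ _ f `[a, b]%R) => x; rewrite in_itv /= => xab.
  by have := fd x xab => /(@ex_derive _ _ _ _ _ _ _).
have fd' : forall x, x \in `]a, b[%R -> is_derive x 1 f (df x).
  by move=> x; rewrite in_itv /= => /andP[? ?]; apply: fd; apply/andP; split; apply: ltW.
have [c] := MVT altb fd' fc.
move=> ci /eqP; rewrite subr_eq => /eqP ->.
rewrite lerDr mulr_ge0 //; first by apply: dfp; move: ci; rewrite in_itv.
by rewrite subr_ge0 ltW.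
Qed.

Lemma d1s x : is_derive x 1 (fun s : R => 1 - s) (-1).
Proof.
have := is_deriveB (is_derive_cst (1:R) x 1) (is_derive_id x 1).
by rewrite sub0r.
Qed.

Lemma dln1 x : x < 1 -> is_derive x 1 (fun s : R => ln (1 - s)) (- (1 - x)^-1).
Proof.
move=> x1.
have h2 : is_derive (1 - x) 1 (@ln R) (1 - x)^-1 by apply: is_derive1_ln; lra.
have := @is_derive1_comp R (@ln R) (fun s => 1 - s) x _ _ h2 (d1s x).
by rewrite mulrN1.
Qed.

Lemma dinv1 x : x < 1 -> is_derive x 1 (fun s : R => (1 - s)^-1) ((1 - x)^-2).
Proof.
move=> x1.
have h := @is_deriveV R (fun s => 1 - s) x (-1) 1 _ (d1s x).
apply: is_derive_eq; first by apply: h; rewrite subr_eq0 eq_sym lt_eqF.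
by rewrite /GRing.scale /= mulrN1 opprK.
Qed.

Definition K s := (1 - s)^-1 + 2 * ln (1 - s) + s - 1.

Lemma dK x : x < 1 -> is_derive x 1 K (((1 - x)^-1 - 1) ^+ 2).
Proof.
move=> x1.
have h := is_deriveD (is_deriveD (is_deriveD (dinv1 x x1) (is_deriveZ 2 (dln1 x x1))) (is_derive_id x 1)) (is_derive_cst (-1 : R) x 1).
set F := (X in is_derive _ _ X _) in h.
have -> : K = F.
  by apply/funext => s; rewrite /K /F /=.
apply: (is_derive_eq h).
have ne : 1 - x != 0 by rewrite subr_eq0 eq_sym lt_eqF.
by rewrite /GRing.scale /=; field.
Qed.


Lemma K_ge0 s : 0 <= s < 1 -> 0 <= K s.
Proof.
case/andP=> s0 s1.
have -> : 0 = K 0 by rewrite /K subr0 invr1 ln1 mulr0 addr0 addr0 subrr.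
apply: (@mono_helper K (fun x => ((1 - x)^-1 - 1) ^+ 2)) => //.
  move=> x /andP[_ xs]; apply: dK; lra.
by move=> x _; apply: sqr_ge0.
Qed.

Definition H s := psiE s * (s * s)^-1.

Lemma dpsi x : x < 1 -> is_derive x 1 (@psiE R) ((1 - x)^-1 - 1).
Proof.
move=> x1.
have h := is_deriveB (is_deriveN (dln1 x x1)) (is_derive_id x 1).
set F := (X in is_derive _ _ X _) in h.
have -> : (@psiE R) = F by apply/funext => s; rewrite /psiE /F /=.
by apply: (is_derive_eq h); rewrite opprK.
Qed.

Lemma dH x : 0 < x < 1 -> is_derive x 1 H (K x / (x * x * x)).
Proof.
case/andP=> x0 x1.
have hs : is_derive x 1 (fun s : R => s * s) (x + x).
  have := is_deriveM (is_derive_id x 1) (is_derive_id x 1).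
  by rewrite /GRing.scale /= mulr1.
have xx : x * x != 0 by rewrite mulf_neq0 // gt_eqF.
have hv := @is_deriveV R (fun s => s * s) x (x + x) 1 xx hs.
have h := is_deriveM (dpsi x x1) hv.
set F := (X in is_derive _ _ X _) in h.
have -> : H = F by apply/funext => s; rewrite /H /F /=.
apply: (is_derive_eq h).
have ne : 1 - x != 0 by rewrite subr_eq0 eq_sym lt_eqF.
have ne0 : x != 0 by rewrite gt_eqF.
by rewrite /GRing.scale /= /K /psiE; field; rewrite ne0 ne.
Qed.

Lemma H_mono s t : 0 < s -> s <= t -> t < 1 -> H s <= H t.
Proof.
move=> s0 st t1.
apply: (@mono_helper H (fun x => K x / (x * x * x))) => //.
  move=> x /andP[sx xt]; apply: dH; apply/andP; split; lra.
move=> x /andP[sx xt]; apply: divr_ge0; first by apply: K_ge0; apply/andP; split; lra.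
by rewrite !mulr_ge0 //; lra.
Qed.

Lemma psi_bound s t : 0 <= s -> s <= t -> t < 1 -> 0 < t ->
  psiE s <= s ^+ 2 * (psiE t / t ^+ 2).
Proof.
move=> s0 st t1 t0.
case: (ltgtP 0 s) s0 => // [sp|<-] _; last first.
  by rewrite /psiE !subr0 ln1 oppr0 expr2 !mul0r.
have := @H_mono s t sp st t1; rewrite /H -!expr2 => h.
have s2 : 0 < s ^+ 2 by rewrite exprn_gt0.
have -> : psiE s = s ^+ 2 * (psiE s / s ^+ 2) by field; rewrite gt_eqF.
by apply: ler_wpM2l => //; apply: ltW.
Qed.


Lemma psi_ge0 s : 0 <= s < 1 -> 0 <= psiE s.
Proof.
case/andP=> s0 s1; rewrite /psiE subr_ge0 lerNr.
have := @le_ln1Dx R (- s); rewrite -/(1 - s) => -> //; lra.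
Qed.

Lemma mpsi : measurable_fun setT (@psiE R).
Proof.
rewrite /psiE.
apply: measurable_funB => //.
apply: measurableT_comp => //.
apply: measurableT_comp; first exact: measurable_ln.
exact: measurable_funB.
Qed.


Lemma gmu_facts {mu : R} : 0 < mu < 1 ->
  [/\ 0 < gmu mu, gmu mu < 1, mu <= gmu mu & 1 - mu <= gmu mu].
Proof.
case/andP=> m0 m1; rewrite /gmu maxEle; case: ifP => h; split; lra.
Qed.

Definition cst_of (mu : R) := psiE (gmu mu) / (gmu mu) ^+ 2.

Lemma pt_bound (mu x : R) : 0 < mu < 1 -> 0 <= x <= 1 ->
  psiE `|x - mu| <= (x - mu) * (x - mu) * cst_of mu.
Proof.
move=> hm /andP[x0 x1]; have [g0 g1 mg mg'] := gmu_facts hm.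
rewrite -expr2 -real_normK ?num_real //.
apply: psi_bound => //.
case: (lerP mu x) => h; lra.
Qed.

Lemma cst_ge0 mu : 0 < mu < 1 -> 0 <= cst_of mu.
Proof.
move=> hm; have [g0 g1 _ _] := gmu_facts hm.
rewrite /cst_of divr_ge0 ?sqr_ge0 //; apply: psi_ge0; lra.
Qed.

End S.

Section P1.
Local Open Scope ereal_scope.
Lemma part1 (R : realType) (d : measure_display) (T : measurableType d) (P : probability T R)
          (X : {RV P >-> R}) (mu : R) :
      (forall t, (0 <= X t <= 1)%R) -> (0 < mu < 1)%R -> ('E_P[X] = mu%:E)%E ->
      ('E_P[fun t => psiE `|(X t - mu)%R|] <=
         'V_P[X] * (psiE (gmu mu) / (gmu mu) ^+ 2)%:E)%E.
Proof.
move=> X01 hm EX.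
rewrite /variance covariance.unlock EX /= expectation.unlock.
rewrite -ge0_integralZr //; last 3 first.
- apply/measurable_EFinP; apply: measurable_funM; apply: measurable_funB => //.
- by move=> x _; rewrite lee_fin; apply: sqr_ge0.
- rewrite lee_fin; exact: cst_ge0.
apply: ge0_le_integral => //.
- move=> x _; rewrite lee_fin; apply: psi_ge0.
  have := X01 x; have [g0 g1 mg mg'] := @gmu_facts R mu hm.
  move=> /andP[a b]; case: (lerP mu (X x)) => h; apply/andP; split; lra.
- apply/measurable_EFinP; apply: measurableT_comp; first exact: mpsi.
  apply: measurableT_comp => //; exact: measurable_funB.
- rewrite (_ : (fun x => _) = EFin \o (fun x => (X x - mu) * (X x - mu) * @cst_of R mu)%R);
    last by apply/funext.
  apply/measurable_EFinP; apply: measurable_funM => //.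
  by apply: measurable_funM; apply: measurable_funB.
- move=> x _; rewrite /= lee_fin; exact: pt_bound.
Qed.
End P1.

Section P2.
Variable R : realType.

Lemma bool_mf (f : bool -> R) : measurable_fun setT f.
Proof. by move=> _ Y _. Qed.

Definition Xb (f : bool -> R) (p : R) : {RV (bernoulli_prob p) >-> R} :=
  mfun_Sub (mem_set (bool_mf f)).

Lemma witness (mu p : R) : 0 < mu < 1 -> 0 < p <= mu * (1 - mu) ->
  exists2 r, [set r : R | exists (d : measure_display) (T : measurableType d)
                        (P : probability T R) (X : {RV P >-> R}),
            [/\ (forall t, 0 <= X t <= 1), ('E_P[X] = mu%:E)%E, (0 < 'V_P[X])%E &
                r = fine ('E_P[fun t => psiE `|(X t - mu)%R|])%E / fine 'V_P[X]]] r
   & psiE (gmu mu) / (gmu mu) ^+ 2 * (1 - p) <= r.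
Proof.
move=> hm hp.
have [g0 g1 mg mg'] := @gmu_facts R mu hm.
case/andP: hm => m0 m1; case/andP: hp => p0 pm.
have pmu : p <= mu by nra.
have p1mu : p <= 1 - mu by nra.
have p1 : p < 1 by nra.
have p01 : 0 <= p <= 1 by apply/andP; split; lra.
have q0 : 0 < 1 - p by lra.
set s : R := if mu <= 1 - mu then 1 else 0.
set a : R := (mu - p * s) / (1 - p).
have sg : `|s - mu| = gmu mu.
  rewrite /s /gmu maxEle; case: ifP => h.
    by rewrite ger0_norm; lra.
  by rewrite sub0r normrN ger0_norm; lra.
have hs : 0 <= s <= 1 by rewrite /s; case: ifP => _; apply/andP; split; lra.
have ha : 0 <= a <= 1.
  rewrite /a /s; case: ifP => h; apply/andP; split.
  - by apply: divr_ge0; lra.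
  - by rewrite ler_pdivrMr //; lra.
  - by apply: divr_ge0; lra.
  - by rewrite ler_pdivrMr //; lra.
have amu : a - mu = p * (mu - s) / (1 - p).
  by rewrite /a; field; rewrite gt_eqF.
pose f : bool -> R := fun b => if b then s else a.
pose X := Xb f p.
have X01 : forall t, 0 <= X t <= 1 by case.
have EX : ('E_(bernoulli_prob p)[X] = mu%:E)%E.
  rewrite expectation.unlock (integral_bernoulli_prob p01); last first.
    by case; rewrite lee_fin /= /f; [case/andP: hs | case/andP: ha].
  rewrite /= /f /unstable.onem -!EFinM -EFinD; congr EFin.
  by rewrite /a; field; rewrite gt_eqF.
have VX : ('V_(bernoulli_prob p)[X] = (p * gmu mu ^+ 2 / (1 - p))%:E)%E.
  rewrite /variance covariance.unlock EX /= expectation.unlock.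
  rewrite (integral_bernoulli_prob p01); last first.
    by move=> b; rewrite lee_fin /=; apply: sqr_ge0.
  rewrite /= /f /unstable.onem -!EFinM -EFinD; congr EFin.
  rewrite !fctE /=. rewrite amu -sg real_normK ?num_real //.
  by field; rewrite gt_eqF.
have EP : ('E_(bernoulli_prob p)[fun t => psiE `|(X t - mu)%R|] =
    (p * psiE (gmu mu) + (1 - p) * psiE `|a - mu|)%:E)%E.
  rewrite expectation.unlock (integral_bernoulli_prob p01); last first.
    case; rewrite lee_fin /= /f; apply: psi_ge0.
      by rewrite sg; apply/andP; split; lra.
    by case/andP: ha => ha0 ha1; case: (lerP mu a) => h; apply/andP; split; lra.
  by rewrite /= /f /unstable.onem -!EFinM -EFinD sg.
exists (fine ('E_(bernoulli_prob p)[fun t => psiE `|(X t - mu)%R|])%E /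
        fine 'V_(bernoulli_prob p)[X]).
  exists _, _, (bernoulli_prob p), X; split => //.
  by rewrite VX lte_fin; apply: divr_gt0; [apply: mulr_gt0 => //; apply: exprn_gt0|].
rewrite EP VX /=.
have B0 : 0 <= psiE `|a - mu|.
  by apply: psi_ge0; case/andP: ha => ha0 ha1; case: (lerP mu a) => h; apply/andP; split; lra.
have -> : psiE (gmu mu) / gmu mu ^+ 2 * (1 - p) =
    (p * psiE (gmu mu)) / (p * gmu mu ^+ 2 / (1 - p)).
  by field; rewrite !gt_eqF.
apply: ler_wpM2r.
  by rewrite invr_ge0; apply: divr_ge0; [apply: mulr_ge0; [lra|apply: sqr_ge0]|lra].
by rewrite lerDl; apply: mulr_ge0 => //; lra.
Qed.

End P2.

Theorem mainTheorem17 (R : realType) :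
  (forall (d : measure_display) (T : measurableType d) (P : probability T R)
          (X : {RV P >-> R}) (mu : R),
      (forall t, 0 <= X t <= 1) -> 0 < mu < 1 -> ('E_P[X] = mu%:E)%E ->
      ('E_P[fun t => psiE `|(X t - mu)%R|] <=
         'V_P[X] * (psiE (gmu mu) / (gmu mu) ^+ 2)%:E)%E)
  /\
  (forall mu : R, 0 < mu < 1 ->
     sup [set r : R | exists (d : measure_display) (T : measurableType d)
                        (P : probability T R) (X : {RV P >-> R}),
            [/\ (forall t, 0 <= X t <= 1), ('E_P[X] = mu%:E)%E, (0 < 'V_P[X])%E &
                r = fine ('E_P[fun t => psiE `|(X t - mu)%R|])%E / fine 'V_P[X]]]
     = psiE (gmu mu) / (gmu mu) ^+ 2).
Proof.
split; first by move=> d T P X mu; exact: part1.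
move=> mu hm.
have c0 := @cst_ge0 R mu hm; rewrite /cst_of in c0.
set c := psiE (gmu mu) / gmu mu ^+ 2 in c0 *.
set S := [set r : R | _].
have ub : ubound S c.
  move=> r [d [T [P [X [X01 EX V0 ->]]]]].
  have h1 := @part1 R d T P X mu X01 hm EX; rewrite -/c in h1.
  move: h1 V0; case: ('V_P[X])%E => [v| |] //=.
    move=> h1; rewrite lte_fin => v0.
    move: h1; case: ('E_P[_])%E => [e| |] //=.
      by rewrite lee_fin => h; rewrite ler_pdivrMr // mulrC.
    by move=> _; rewrite mul0r.
  by move=> _ _; rewrite invr0 mulr0.
have hmm : 0 < mu * (1 - mu) by case/andP: hm => ? ?; apply: mulr_gt0; lra.
have ne : S !=set0.
  have [r Sr _] := @witness R mu (mu * (1 - mu)) hm (introT andP (conj hmm (lexx _))).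
  by exists r.
apply/eqP; rewrite eq_le; apply/andP; split; first exact: ge_sup.
apply/ler_addgt0Pr => e e0.
set q := e / (e + c).
have q0 : 0 < q by rewrite /q divr_gt0 //; lra.
have q1 : q <= 1 by rewrite /q ler_pdivrMr; lra.
have cq : c * q <= e by rewrite /q mulrA ler_pdivrMr; [nra|lra].
have hp : 0 < mu * (1 - mu) * q <= mu * (1 - mu).
  apply/andP; split; first exact: mulr_gt0.
  by rewrite ler_piMr //; apply: ltW.
have [r Sr hr] := @witness R mu (mu * (1 - mu) * q) hm hp.
have rs : r <= sup S by apply: ub_le_sup => //; exists c.
have m1 : mu * (1 - mu) <= 1 by case/andP: hm => ? ?; nra.
have : c * (mu * (1 - mu) * q) <= e.
  rewrite mulrCA; apply: (le_trans _ cq); rewrite ler_piMl //.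
  by apply: mulr_ge0 => //; apply: ltW.
move=> hce.
have : c * (1 - mu * (1 - mu) * q) = c - c * (mu * (1 - mu) * q) by ring.
move: hr; rewrite -/c => hr.
clear Sr; lra.
Qed.
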